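(* Let $(G_1,\precsim_1)$ and $(G_2,\precsim_2)$ be compatible quasi-ordered abelian groups which are elementarily equivalent in the language $\{0,+,-,\precsim\}$. Then the ordered part of $G_1$ is elementarily equivalent to the ordered part of $G_2$, and the valued part of $G_1$ is elementarily equivalent to the valued part of $G_2$ (both in the language $\{0,+,-,\precsim\}$).
   Context: A compatible quasi-ordered abelian group is an abelian group $G$ with a total quasi-order $\precsim$ (reflexive, transitive, any two elements comparable) such that, writing $a\sim b$ for $a\precsim b\wedge b\precsim a$: $(Q_1)$ $x\sim0\Rightarrow x=0$; $(Q_2)$ $x\precsim y\wedge y\not\sim z\Rightarrow x+z\precsim y+z$. With $cl(g)$ the $\sim$-class of $g$, $g$ is o-type if $cl(g)=\{g\}$ and $g$ is not of order $2$; $G^o$, the set of o-type elements, is a subgroup. The ordered part of $G$ is $(G^o,\precsim|_{G^o})$; the valued part is $G/G^o$ with the quasi-order $g+G^o\precsim h+G^o\Leftrightarrow g-h\in G^o\vee(g-h\notin G^o\wedge g\precsim h)$. In the language, $-$ is the unary negation and $\precsim$ is interpreted as the quasi-order. *)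

(* Defs.v *)
From HB Require Import structures.
From mathcomp Require Import all_boot all_algebra.
Unset Printing Implicit Defensive.
Import GRing.Theory.
Local Open Scope ring_scope.

Inductive term : Type :=
  | tVar : nat -> term
  | tZero : term
  | tAdd : term -> term -> term
  | tNeg : term -> term.

Inductive formula : Type :=
  | fEq  : term -> term -> formula
  | fLe  : term -> term -> formula
  | fFalse : formula
  | fNot : formula -> formula
  | fAnd : formula -> formula -> formula
  | fOr  : formula -> formula -> formula
  | fImp : formula -> formula -> formula
  | fAll : nat -> formula -> formula
  | fEx  : nat -> formula -> formula.

Fixpoint term_has_var (i : nat) (t : term) : bool :=
  match t with
  | tVar j => j == i
  | tZero => false
  | tAdd t1 t2 => term_has_var i t1 || term_has_var i t2
  | tNeg t1 => term_has_var i t1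
  end.

Fixpoint free_in (i : nat) (phi : formula) : bool :=
  match phi with
  | fEq t1 t2 | fLe t1 t2 => term_has_var i t1 || term_has_var i t2
  | fFalse => false
  | fNot p => free_in i p
  | fAnd p q | fOr p q | fImp p q => free_in i p || free_in i q
  | fAll j p | fEx j p => (i != j) && free_in i p
  end.

Definition sentence (phi : formula) : Prop := forall i, ~~ free_in i phi.

(* An L-structure, presented on a carrier [carrier] by a domain predicate
   (the universe) and a relation interpreting equality (a congruence).
   An ordinary structure has [dom = True] and [eqv = eq]; a substructure is
   obtained by restricting [dom], a quotient structure by coarsening [eqv]. *)
Record Lstruct := {
  carrier : Type;
  dom : carrier -> Prop;
  eqv : carrier -> carrier -> Prop;
  s_zero : carrier;
  s_add : carrier -> carrier -> carrier;
  s_neg : carrier -> carrier;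
  s_le : carrier -> carrier -> Prop
}.

Fixpoint eval_term (M : Lstruct) (e : nat -> carrier M) (t : term) : carrier M :=
  match t with
  | tVar j => e j
  | tZero => s_zero M
  | tAdd t1 t2 => s_add M (eval_term M e t1) (eval_term M e t2)
  | tNeg t1 => s_neg M (eval_term M e t1)
  end.

Definition upd (T : Type) (e : nat -> T) (i : nat) (x : T) : nat -> T :=
  fun j => if j == i then x else e j.

Fixpoint sat (M : Lstruct) (e : nat -> carrier M) (phi : formula) : Prop :=
  match phi with
  | fEq t1 t2 => eqv M (eval_term M e t1) (eval_term M e t2)
  | fLe t1 t2 => s_le M (eval_term M e t1) (eval_term M e t2)
  | fFalse => False
  | fNot p => ~ sat M e p
  | fAnd p q => sat M e p /\ sat M e q
  | fOr p q => sat M e p \/ sat M e q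
  | fImp p q => sat M e p -> sat M e q
  | fAll j p => forall x, dom M x -> sat M (upd _ e j x) p
  | fEx j p => exists x, dom M x /\ sat M (upd _ e j x) p
  end.

Definition holds (M : Lstruct) (phi : formula) : Prop :=
  forall e : nat -> carrier M, (forall i, dom M (e i)) -> sat M e phi.

Definition elem_equiv (M N : Lstruct) : Prop :=
  forall phi, sentence phi -> (holds M phi <-> holds N phi).

Section CQOAG.
Variables (G : zmodType) (le : G -> G -> Prop).

Definition qsim (a b : G) : Prop := le a b /\ le b a.

Definition cqoag : Prop :=
  [/\ (forall x, le x x),
      (forall x y z, le x y -> le y z -> le x z),
      (forall x y, le x y \/ le y x),
      (forall x, qsim x 0 -> x = 0) &
      (forall x y z, le x y -> ~ qsim y z -> le (x + z) (y + z))].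

Definition order2 (g : G) : Prop := g != 0 /\ g + g = 0.

Definition otype (g : G) : Prop :=
  (forall h, qsim g h <-> h = g) /\ ~ order2 g.

Definition full_struct : Lstruct :=
  {| carrier := G; dom := fun _ => True; eqv := eq;
     s_zero := 0; s_add := +%R; s_neg := -%R; s_le := le |}.

Definition ordered_part : Lstruct :=
  {| carrier := G; dom := otype; eqv := eq;
     s_zero := 0; s_add := +%R; s_neg := -%R; s_le := le |}.

(* valued part G/G^o: quotient structure, represented on G with equality
   interpreted as congruence modulo G^o and with the quasi-order
   g+G^o ≾ h+G^o  <->  g-h ∈ G^o  \/ (g-h ∉ G^o /\ g ≾ h). *)
Definition valued_le (g h : G) : Prop :=
  otype (g - h) \/ (~ otype (g - h) /\ le g h).

Definition valued_part : Lstruct :=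
  {| carrier := G; dom := fun _ => True; eqv := fun g h => otype (g - h);
     s_zero := 0; s_add := +%R; s_neg := -%R; s_le := valued_le |}.

End CQOAG.

(* Main.v *)
Require Import Defs.
From mathcomp Require Import all_boot all_algebra.
From Stdlib Require Import Setoid.
Import GRing.Theory.
Local Open Scope ring_scope.

Fixpoint tbound (t : term) : nat :=
  match t with
  | tVar j => j.+1
  | tZero => 0%N
  | tAdd a b => maxn (tbound a) (tbound b)
  | tNeg a => tbound a
  end.

Fixpoint fbound (p : formula) : nat :=
  match p with
  | fEq a b | fLe a b => maxn (tbound a) (tbound b)
  | fFalse => 0%N
  | fNot q => fbound q
  | fAnd q r | fOr q r | fImp q r => maxn (fbound q) (fbound r)
  | fAll j q | fEx j q => maxn j.+1 (fbound q)
  end.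

Lemma tbound_var i t : term_has_var i t -> (i < tbound t)%N.
Proof.
elim: t => [j|//|a IHa b IHb|a IHa] /=.
- by move/eqP=> ->.
- by case/orP=> [/IHa|/IHb]; rewrite leq_max => ->; rewrite ?orbT.
- exact: IHa.
Qed.

Definition fIff a b := fAnd (fImp a b) (fImp b a).

Definition otT (t : term) (h : nat) : formula := locked (
  fAnd (fAll h (fIff (fAnd (fLe t (tVar h)) (fLe (tVar h) t)) (fEq (tVar h) t)))
       (fNot (fAnd (fNot (fEq t tZero)) (fEq (tAdd t t) tZero)))).


Lemma otT_free i t h : free_in i (otT t h) -> term_has_var i t.
Proof.
rewrite /otT -lock /=; case: (eqVneq i h) => [->|ne] /=.
  by rewrite !orbF !orbA !orbb.
by move=> H; move: H; rewrite /=; case: (term_has_var i t); rewrite ?orbT ?orbF //= ?(negbTE ne) ?orbF.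
Qed.

Lemma eval_coinc (M : Lstruct) t (e e' : nat -> carrier M) :
  (forall i, term_has_var i t -> e i = e' i) -> eval_term M e t = eval_term M e' t.
Proof.
elim: t => [j|//|a IHa b IHb|a IHa] /= H.
- by apply: H; rewrite /= eqxx.
- by rewrite IHa ?IHb // => i Hi; apply: H; rewrite Hi ?orbT.
- by rewrite IHa.
Qed.

Lemma sat_coinc (M : Lstruct) p : forall (e e' : nat -> carrier M),
  (forall i, free_in i p -> e i = e' i) -> (sat M e p <-> sat M e' p).
Proof.
elim: p => [a b|a b| |q IH|q IHq r IHr|q IHq r IHr|q IHq r IHr|j q IH|j q IH] e e' H /=.
- by rewrite (eval_coinc _ a e e') ?(eval_coinc _ b e e') // => i Hi; apply: H; rewrite /= Hi ?orbT.
- by rewrite (eval_coinc _ a e e') ?(eval_coinc _ b e e') // => i Hi; apply: H; rewrite /= Hi ?orbT.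
- by [].
- by have := IH e e' H; tauto.
- have Kq : sat M e q <-> sat M e' q by apply: IHq => i Hi; apply: H; rewrite /= Hi.
  have Kr : sat M e r <-> sat M e' r by apply: IHr => i Hi; apply: H; rewrite /= Hi orbT.
  tauto.
- have Kq : sat M e q <-> sat M e' q by apply: IHq => i Hi; apply: H; rewrite /= Hi.
  have Kr : sat M e r <-> sat M e' r by apply: IHr => i Hi; apply: H; rewrite /= Hi orbT.
  tauto.
- have Kq : sat M e q <-> sat M e' q by apply: IHq => i Hi; apply: H; rewrite /= Hi.
  have Kr : sat M e r <-> sat M e' r by apply: IHr => i Hi; apply: H; rewrite /= Hi orbT.
  tauto.
- have K : forall x, sat M (upd _ e j x) q <-> sat M (upd _ e' j x) q.
    move=> x; apply: IH => i Hi; rewrite /upd; case: (eqVneq i j) => // ne.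
    by apply: H; rewrite /= ne.
  by split=> Hx x Dx; apply/K; apply: Hx.
- have K : forall x, sat M (upd _ e j x) q <-> sat M (upd _ e' j x) q.
    move=> x; apply: IH => i Hi; rewrite /upd; case: (eqVneq i j) => // ne.
    by apply: H; rewrite /= ne.
  by split=> -[x [Dx Hx]]; exists x; split => //; apply/K.
Qed.

Section Work.
Variables (G : zmodType) (le : G -> G -> Prop).

Lemma eval_full_upd e h x t : ~~ term_has_var h t ->
  eval_term (full_struct G le) (upd _ e h x) t = eval_term (full_struct G le) e t.
Proof.
move=> H; apply: eval_coinc => i Hi; rewrite /upd; case: (eqVneq i h) => // E.
by move: H; rewrite -E Hi.
Qed.

Lemma otT_sat e t h : ~~ term_has_var h t ->
  (sat (full_struct G le) e (otT t h) <-> otype G le (eval_term (full_struct G le) e t)).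
Proof.
move=> Hh; rewrite /otT -lock /= /otype /order2 /qsim.
have Ev : forall x, eval_term (full_struct G le) (upd _ e h x) t = eval_term (full_struct G le) e t.
  by move=> x; apply: eval_full_upd.
have Uh : forall x, upd _ e h x h = x by move=> x; rewrite /upd eqxx.
set g := eval_term _ e t.
split.
- move=> [H1 H2]; split.
    move=> y; have := H1 y I; rewrite Ev Uh => -[A B]; split; [exact: A|exact: B].
  move=> [/eqP A B]; apply: H2; split => //.
- move=> [H1 H2]; split.
    move=> y _; rewrite Ev Uh; split; [exact: (proj1 (H1 y))|exact: (proj2 (H1 y))].
  move=> [A B]; apply: H2; split => //; exact/eqP.
Qed.

Lemma eval_ord e t : eval_term (ordered_part G le) e t = eval_term (full_struct G le) e t.
Proof. by elim: t => //= [a -> b ->|a ->]. Qed.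

Lemma eval_val e t : eval_term (valued_part G le) e t = eval_term (full_struct G le) e t.
Proof. by elim: t => //= [a -> b ->|a ->]. Qed.

End Work.

Fixpoint trO (h : nat) (p : formula) : formula :=
  match p with
  | fEq a b => fEq a b
  | fLe a b => fLe a b
  | fFalse => fFalse
  | fNot q => fNot (trO h q)
  | fAnd q r => fAnd (trO h q) (trO h r)
  | fOr q r => fOr (trO h q) (trO h r)
  | fImp q r => fImp (trO h q) (trO h r)
  | fAll j q => fAll j (fImp (otT (tVar j) h) (trO h q))
  | fEx j q => fEx j (fAnd (otT (tVar j) h) (trO h q))
  end.

Definition dterm a b := tAdd a (tNeg b).

Fixpoint trV (h : nat) (p : formula) : formula :=
  match p with
  | fEq a b => otT (dterm a b) h
  | fLe a b => fOr (otT (dterm a b) h) (fAnd (fNot (otT (dterm a b) h)) (fLe a b))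
  | fFalse => fFalse
  | fNot q => fNot (trV h q)
  | fAnd q r => fAnd (trV h q) (trV h r)
  | fOr q r => fOr (trV h q) (trV h r)
  | fImp q r => fImp (trV h q) (trV h r)
  | fAll j q => fAll j (trV h q)
  | fEx j q => fEx j (trV h q)
  end.

Lemma trO_free h p i : free_in i (trO h p) -> free_in i p.
Proof.
elim: p => /= [a b|a b||q IH|q IHq r IHr|q IHq r IHr|q IHq r IHr|j q IH|j q IH].
- by [].
- by [].
- by [].
- exact: IH.
- by case/orP=> [/IHq|/IHr] ->; rewrite ?orbT.
- by case/orP=> [/IHq|/IHr] ->; rewrite ?orbT.
- by case/orP=> [/IHq|/IHr] ->; rewrite ?orbT.
- case/andP=> ne /orP[H|/IH ->]; last by rewrite ne.
  by have := otT_free _ _ _ H; rewrite /= eq_sym (negbTE ne).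
- case/andP=> ne /orP[H|/IH ->]; last by rewrite ne.
  by have := otT_free _ _ _ H; rewrite /= eq_sym (negbTE ne).
Qed.

Lemma trV_free h p i : free_in i (trV h p) -> free_in i p.
Proof.
elim: p => /= [a b|a b||q IH|q IHq r IHr|q IHq r IHr|q IHq r IHr|j q IH|j q IH].
- by move=> H; move: (otT_free _ _ _ H).
- case/orP=> [H|/orP[H|//]]; move: (otT_free _ _ _ H) => /=; by [].
- by [].
- exact: IH.
- by case/orP=> [/IHq|/IHr] ->; rewrite ?orbT.
- by case/orP=> [/IHq|/IHr] ->; rewrite ?orbT.
- by case/orP=> [/IHq|/IHr] ->; rewrite ?orbT.
- by case/andP=> -> /IH.
- by case/andP=> -> /IH.
Qed.

Lemma nohas h t : (tbound t <= h)%N -> ~~ term_has_var h t.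
Proof. by move=> H; apply/negP => /tbound_var; rewrite ltnNge H. Qed.

Lemma trO_sat (G : zmodType) (le : G -> G -> Prop) h p : (fbound p <= h)%N ->
  forall e, sat (ordered_part G le) e p <-> sat (full_struct G le) e (trO h p).
Proof.
elim: p => [a b|a b||q IH|q IHq r IHr|q IHq r IHr|q IHq r IHr|j q IH|j q IH] /= Hb e.
- by rewrite !eval_ord.
- by rewrite !eval_ord.
- by [].
- by have := IH Hb e; tauto.
- move: Hb; rewrite geq_max => /andP[Hq Hr].
  by have := IHq Hq e; have := IHr Hr e; tauto.
- move: Hb; rewrite geq_max => /andP[Hq Hr].
  by have := IHq Hq e; have := IHr Hr e; tauto.
- move: Hb; rewrite geq_max => /andP[Hq Hr].
  by have := IHq Hq e; have := IHr Hr e; tauto.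
- move: Hb; rewrite geq_max => /andP[Hj Hq].
  have O : forall x, sat (full_struct G le) (upd _ e j x) (otT (tVar j) h) <-> otype G le x.
    move=> x; rewrite otT_sat; last by apply: nohas.
    by rewrite /= /upd eqxx.
  split=> H x Dx.
    move=> /O Ox; apply/IH => //; exact: H.
  by apply/IH => //; apply: H => //; apply/O.
- move: Hb; rewrite geq_max => /andP[Hj Hq].
  have O : forall x, sat (full_struct G le) (upd _ e j x) (otT (tVar j) h) <-> otype G le x.
    move=> x; rewrite otT_sat; last by apply: nohas.
    by rewrite /= /upd eqxx.
  split=> -[x [Dx H]]; exists x.
    by split => //; split; [apply/O|apply/IH].
  case: H => HO HQ; split; [exact/O | exact/IH].
Qed.

Lemma trV_sat (G : zmodType) (le : G -> G -> Prop) h p : (fbound p <= h)%N ->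
  forall e, sat (valued_part G le) e p <-> sat (full_struct G le) e (trV h p).
Proof.
elim: p => [a b|a b||q IH|q IHq r IHr|q IHq r IHr|q IHq r IHr|j q IH|j q IH] /= Hb e.
- rewrite otT_sat; last by apply: nohas; exact: Hb.
  by rewrite /= !eval_val.
- rewrite otT_sat; last by apply: nohas; exact: Hb.
  by rewrite /= !eval_val.
- by [].
- by have := IH Hb e; tauto.
- move: Hb; rewrite geq_max => /andP[Hq Hr].
  by have := IHq Hq e; have := IHr Hr e; tauto.
- move: Hb; rewrite geq_max => /andP[Hq Hr].
  by have := IHq Hq e; have := IHr Hr e; tauto.
- move: Hb; rewrite geq_max => /andP[Hq Hr].
  by have := IHq Hq e; have := IHr Hr e; tauto.
- move: Hb; rewrite geq_max => /andP[Hj Hq].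
  by split=> H x Dx; apply/IH => //; apply: H.
- move: Hb; rewrite geq_max => /andP[Hj Hq].
  by split=> -[x [Dx H]]; exists x; split => //; apply/IH.
Qed.

Lemma zero_otype (G : zmodType) (le : G -> G -> Prop) : cqoag G le -> otype G le 0.
Proof.
case=> refl _ _ q1 _; split.
  move=> y; split; first by move=> [A B]; apply: q1; split.
  by move=> ->; split; apply: refl.
by case; rewrite eqxx.
Qed.

Lemma ord_holds (G : zmodType) (le : G -> G -> Prop) p : cqoag G le -> sentence p ->
  (holds (ordered_part G le) p <-> holds (full_struct G le) (trO (fbound p) p)).
Proof.
move=> HG Hs; split=> H e He.
- have Hs' : forall i, free_in i (trO (fbound p) p) -> e i = (fun _ => 0 : G) i.
    by move=> i /trO_free Hi; move: (Hs i); rewrite Hi.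
  apply/(sat_coinc _ _ _ _ Hs'); apply/trO_sat => //.
  apply: (H (fun _ => 0)) => i; exact: zero_otype.
- by apply/(trO_sat _ _ (fbound p)) => //; apply: H.
Qed.

Lemma val_holds (G : zmodType) (le : G -> G -> Prop) p :
  (holds (valued_part G le) p <-> holds (full_struct G le) (trV (fbound p) p)).
Proof.
by split=> H e He; [apply/trV_sat => //; apply: H | apply/(trV_sat _ _ (fbound p)) => //; apply: H].
Qed.

Theorem mainTheorem16 (G1 G2 : zmodType) (le1 : G1 -> G1 -> Prop) (le2 : G2 -> G2 -> Prop) :
  cqoag G1 le1 -> cqoag G2 le2 ->
  elem_equiv (full_struct G1 le1) (full_struct G2 le2) ->
  elem_equiv (ordered_part G1 le1) (ordered_part G2 le2) /\
  elem_equiv (valued_part G1 le1) (valued_part G2 le2).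
Proof.
move=> H1 H2 E; split=> p Hs.
- rewrite (ord_holds _ _ _ H1 Hs) (ord_holds _ _ _ H2 Hs); apply: E.
  by move=> i; apply/negP => /trO_free Hi; move: (Hs i); rewrite Hi.
- rewrite !val_holds; apply: E.
  by move=> i; apply/negP => /trV_free Hi; move: (Hs i); rewrite Hi.
Qed.
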